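(* For every instance, the infima over valid stochastic schedules satisfy $$\inf_\sigma \mathrm{EMP}[\sigma]=\inf_\sigma\mathrm{MEP}[\sigma]=\inf_\sigma\mathrm{EEP}[\sigma]\qquad\text{and}\qquad \inf_\sigma\mathrm{WMP}[\sigma]=\inf_\sigma\mathrm{MWP}[\sigma]=\inf_\sigma\mathrm{WEP}[\sigma].$$
   Context: An instance consists of a finite set $E$ of $n$ elements with nonnegative weights $(p_e)_{e\in E}$, and $m$ tests; test $i\in[m]$ is a subset $s_i\subseteq E$. A schedule is an infinite sequence $\sigma_1,\sigma_2,\dots\in[m]$ of tests. A stochastic schedule generates the sequence randomly, the distribution of $\sigma_t$ possibly depending on $\sigma_1,\dots,\sigma_{t-1}$ (deterministic schedules are a special case). The detection time of element $e$ at time $t\ge 1$ is $T(e,t)=\mathbb{E}\big[1+\min\{h\ge 0: e\in s_{\sigma_{t+h}}\}\big]$. Let $M_t[e]=\sup_{t\ge1}T(e,t)$ and $E_t[e]=\lim_{H\to\infty}\frac1H\sum_{t=1}^H T(e,t)$. A schedule is valid if for every $e$, $M_t[e]$ is finite and $E_t[e]$ exists, and for every test $i$ the limit $\lim_{H\to\infty}\frac1H\sum_{t=1}^H\Pr[\sigma_t=i]$ exists. Objectives: $\mathrm{EMP}=\sum_e p_e M_t[e]$, $\mathrm{MEP}=\sup_t\sum_e p_eT(e,t)$, $\mathrm{EEP}=\sum_e p_eE_t[e]$, $\mathrm{WMP}=\sup_{e,t}p_eT(e,t)$, $\mathrm{WEP}=\max_e p_eE_t[e]$, $\mathrm{MWP}=\lim_{H\to\infty}\frac1H\sum_{t=1}^H\max_e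 p_eT(e,t)$. Infima are over valid stochastic schedules. *)

(* Defs.v *)
From HB Require Import structures.
From mathcomp Require Import all_boot all_order all_algebra.
From mathcomp Require Import all_classical all_reals all_analysis.
Set Implicit Arguments. Unset Strict Implicit. Unset Printing Implicit Defensive.
Import Order.TTheory GRing.Theory Num.Theory numFieldNormedType.Exports.
Local Open Scope classical_set_scope.
Local Open Scope ring_scope.

(* Elements are 'I_n, tests are 'I_m, test i is the set s i : {set 'I_n},
   weights p : 'I_n -> R.  Times are 0-indexed internally: internal time t
   corresponds to time t+1 of the paper.

   A stochastic schedule is given by its conditional laws: K h is the
   distribution of the next test given the history h (the tests chosen so far). *)
Definition kernel (R : realType) (m : nat) := seq 'I_m -> 'I_m -> R.

Definition is_kernel (R : realType) (m : nat) (K : kernel R m) : Prop :=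
  (forall h i, 0 <= K h i) /\ (forall h, \sum_(i < m) K h i = 1).

Definition prob_hist (R : realType) (m : nat) (K : kernel R m) (L : nat)
  (w : L.-tuple 'I_m) : R :=
  \prod_(i < L) K (take i w) (tnth w i).

(* Pr[ e is not in s_{sigma_{t+1}}, ..., s_{sigma_{t+k}} ]  (paper times t+1..t+k) *)
Definition miss_prob (R : realType) (n m : nat) (s : 'I_m -> {set 'I_n})
  (K : kernel R m) (e : 'I_n) (t k : nat) : R :=
  \sum_(w : (t + k).-tuple 'I_m)
     prob_hist K w *
     (if [forall j : 'I_(t + k), (t <= j)%N ==> (e \notin s (tnth w j))]
      then 1 else 0).

(* Detection time T(e, t+1) = E[1 + H] = sum_{k>=0} Pr[1 + H > k]
   (tail-sum formula for the expectation of a N u {oo}-valued variable). *)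
Definition Tdet (R : realType) (n m : nat) (s : 'I_m -> {set 'I_n})
  (K : kernel R m) (e : 'I_n) (t : nat) : \bar R :=
  (\sum_(k <oo) (miss_prob s K e t k)%:E)%E.

Definition test_prob (R : realType) (m : nat) (K : kernel R m) (i : 'I_m)
  (t : nat) : R :=
  \sum_(w : t.+1.-tuple 'I_m) prob_hist K w * (if tnth w ord_max == i then 1 else 0).

(* (1/H) sum_{t=1}^{H} u_t, indexed by H.+1 to avoid H = 0 *)
Definition cesaro (R : realType) (u : nat -> R) (H : nat) : R :=
  (\sum_(t < H.+1) u t) / H.+1%:R.

Definition Mt (R : realType) (n m : nat) (s : 'I_m -> {set 'I_n})
  (K : kernel R m) (e : 'I_n) : \bar R :=
  ereal_sup (range (Tdet s K e)).

Definition Et (R : realType) (n m : nat) (s : 'I_m -> {set 'I_n})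
  (K : kernel R m) (e : 'I_n) : R :=
  limn (cesaro (fun t => fine (Tdet s K e t))).

Definition valid (R : realType) (n m : nat) (s : 'I_m -> {set 'I_n})
  (K : kernel R m) : Prop :=
  [/\ is_kernel K,
      forall e, (Mt s K e < +oo)%E,
      forall e, cvgn (cesaro (fun t => fine (Tdet s K e t)))
    & forall i, cvgn (cesaro (test_prob K i))].

Section objectives.
Variables (R : realType) (n m : nat) (p : 'I_n -> R) (s : 'I_m -> {set 'I_n}).

Definition EMP (K : kernel R m) : \bar R :=
  (\sum_(e < n) (p e)%:E * Mt s K e)%E.
Definition MEP (K : kernel R m) : \bar R :=
  ereal_sup (range (fun t => \sum_(e < n) (p e)%:E * Tdet s K e t)%E).
Definition EEP (K : kernel R m) : \bar R :=
  (\sum_(e < n) p e * Et s K e)%:E.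
Definition WMP (K : kernel R m) : \bar R :=
  ereal_sup (range (fun et : 'I_n * nat => (p et.1)%:E * Tdet s K et.1 et.2)%E).
Definition WEP (K : kernel R m) : \bar R :=
  (\big[Num.max/0]_(e < n) (p e * Et s K e))%:E.
(* max over e of nonnegative quantities; base 0 is harmless since n > 0 *)
Definition MWP (K : kernel R m) : \bar R :=
  limn_esup (fun H => (cesaro (fun t => fine (\big[maxe/0%E]_(e < n)
                              ((p e)%:E * Tdet s K e t)%E)) H)%:E).

Definition inf_obj (F : kernel R m -> \bar R) : \bar R :=
  ereal_inf [set F K | K in valid s].
End objectives.

(* Main.v *)
Require Import Defs.
From HB Require Import structures.
From mathcomp Require Import all_boot all_order all_algebra.
From mathcomp Require Import all_classical all_reals all_analysis.
From mathcomp Require Import zify ring lra.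
Set Implicit Arguments. Unset Strict Implicit. Unset Printing Implicit Defensive.
Import Order.TTheory GRing.Theory Num.Theory numFieldNormedType.Exports.
Local Open Scope ring_scope.
Local Open Scope classical_set_scope.

Section Tsum.
Variables (R : realType) (m : nat).
Local Notation T := 'I_m.

Definition tsum (n : nat) (f : seq T -> R) : R := \sum_(w : n.-tuple T) f w.

Lemma tsum0 f : tsum 0 f = f [::].
Proof.
rewrite /tsum (eq_bigr (fun _ => f [::])); last by move=> w _; rewrite tuple0.
by rewrite sumr_const card_tuple expn0.
Qed.

Lemma tsum_cons n f : tsum n.+1 f = \sum_(x : T) tsum n (fun w => f (x :: w)).
Proof.
rewrite /tsum pair_bigA /=.
rewrite (reindex (fun p : T * n.-tuple T => [tuple of p.1 :: p.2])) //=.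
exists (fun t : n.+1.-tuple T => (thead t, [tuple of behead t])).
  by move=> [x w] _ /=; congr pair; apply/val_inj.
by move=> t _; apply/val_inj => /=; rewrite [in RHS](tuple_eta t).
Qed.

Lemma tsum_eqn n1 n2 f : n1 = n2 -> tsum n1 f = tsum n2 f.
Proof. by move->. Qed.

Lemma tsum_cat a b f :
  tsum (a + b) f = tsum a (fun u => tsum b (fun v => f (u ++ v))).
Proof.
elim: a f => [|a IH] f; first by rewrite add0n tsum0.
rewrite addSn (tsum_cons (a+b)) (tsum_cons a); apply: eq_bigr => x _; exact: IH.
Qed.

Lemma tsum_rcons n f : tsum n.+1 f = tsum n (fun u => \sum_(x : T) f (rcons u x)).
Proof.
rewrite -addn1 tsum_cat; apply: eq_bigr => u _.
rewrite (tsum_cons 0); apply: eq_bigr => x _.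
by rewrite tsum0 cats1.
Qed.

Lemma eq_tsum n f g : (forall w, size w = n -> f w = g w) -> tsum n f = tsum n g.
Proof. by move=> H; apply: eq_bigr => w _; apply: H; rewrite size_tuple. Qed.

Lemma ler_tsum n f g : (forall w, size w = n -> f w <= g w) -> tsum n f <= tsum n g.
Proof. by move=> H; apply: ler_sum => w _; apply: H; rewrite size_tuple. Qed.

Lemma tsum_ge0 n f : (forall w, size w = n -> 0 <= f w) -> 0 <= tsum n f.
Proof. by move=> H; apply: sumr_ge0 => w _; apply: H; rewrite size_tuple. Qed.

Lemma tsumZ n c f : tsum n (fun w => c * f w) = c * tsum n f.
Proof. by rewrite /tsum mulr_sumr. Qed.

Lemma tsumZr n c f : tsum n (fun w => f w * c) = tsum n f * c.
Proof. by rewrite /tsum mulr_suml. Qed.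

Lemma tsumD n f g : tsum n (fun w => f w + g w) = tsum n f + tsum n g.
Proof. by rewrite /tsum big_split. Qed.

Lemma tsum_sum n (I : finType) (F : I -> seq T -> R) :
  tsum n (fun w => \sum_i F i w) = \sum_i tsum n (F i).
Proof. by rewrite /tsum exchange_big. Qed.

Lemma tsum_sumo n k (F : nat -> seq T -> R) :
  tsum n (fun w => \sum_(i < k) F i w) = \sum_(i < k) tsum n (F i).
Proof. by rewrite /tsum exchange_big. Qed.

End Tsum.
Section Prefix.
Variables (R : realType) (m : nat) (x0 : 'I_m).
Local Notation T := 'I_m.

Definition pmeas (P : seq T -> R) :=
  [/\ P [::] = 1, (forall s, \sum_(x : T) P (rcons s x) = P s) & (forall s, 0 <= P s)].

Lemma marg P u k : pmeas P -> tsum k (fun v => P (u ++ v)) = P u.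
Proof.
move=> [P0 Pr Pp]; elim: k => [|k IH]; first by rewrite tsum0 cats0.
rewrite tsum_rcons -[RHS]IH; apply: eq_tsum => v _.
by under eq_bigr do rewrite -rcons_cat; rewrite Pr.
Qed.

Lemma marg0 P k : pmeas P -> tsum k P = 1.
Proof. by move=> hP; have := marg [::] k hP; case: hP => -> _ _. Qed.

Definition obs (P : seq T -> R) (a n : nat) (f : seq T -> R) : R :=
  tsum (a + n) (fun x => P x * f (drop a x)).

Definition phK (K : Defs.kernel R m) (s : seq T) : R :=
  \prod_(0 <= i < size s) K (take i s) (nth x0 s i).

Lemma prob_histE K L (w : L.-tuple T) : prob_hist K w = phK K w.
Proof.
rewrite /prob_hist /phK size_tuple big_mkord; apply: eq_bigr => i _.
by rewrite (tnth_nth x0).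
Qed.

Lemma phK_rcons K s x : phK K (rcons s x) = phK K s * K s x.
Proof.
rewrite /phK size_rcons big_nat_recr //=; congr (_ * _).
  apply: eq_big_nat => i /andP[_ hi].
  by rewrite nth_rcons hi -cats1 takel_cat // ltnW.
by rewrite nth_rcons ltnn eqxx -cats1 take_size_cat.
Qed.

Lemma phK_pmeas K : is_kernel K -> pmeas (phK K).
Proof.
move=> [K0 K1]; split.
- by rewrite /phK big_nil.
- by move=> s; under eq_bigr do rewrite phK_rcons; rewrite -mulr_sumr K1 mulr1.
- by move=> s; rewrite /phK; apply: prodr_ge0 => i _; apply: K0.
Qed.

Definition kofp (P : seq T -> R) : Defs.kernel R m :=
  fun h i => if P h == 0 then (i == x0)%:R else P (rcons h i) / P h.

Lemma kofp_kernel P : pmeas P -> is_kernel (kofp P).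
Proof.
move=> [P0 Pr Pp]; split.
- move=> h i; rewrite /kofp; case: eqP => _; first by rewrite ler0n.
  by rewrite divr_ge0.
- move=> h; rewrite /kofp; case: eqP => [_|hn].
    by rewrite (bigD1 x0) //= eqxx big1 ?addr0 // => i /negbTE ->.
  by rewrite -mulr_suml Pr divff //; apply/eqP.
Qed.

Lemma phK_kofp P : pmeas P -> forall s, phK (kofp P) s = P s.
Proof.
move=> hP; have [P0 Pr Pp] := hP; elim/last_ind => [|s x IH].
  by rewrite /phK big_nil P0.
rewrite phK_rcons IH /kofp; case: eqP => [h0|hn]; last first.
  by rewrite mulrC divfK //; apply/eqP.
rewrite h0 mul0r; apply/esym/eqP; move: (Pr s); rewrite h0 => /eqP.
rewrite psumr_eq0 => [/allP/(_ x)|i _ //].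
by rewrite mem_index_enum => /(_ isT) /implyP /(_ isT).
Qed.

Lemma drop_catle (r : nat) (u v : seq T) : (r <= size u)%N -> drop r (u ++ v) = drop r u ++ v.
Proof.
move=> hr; rewrite drop_cat; case: ltnP => h //.
have -> : r = size u by apply/eqP; rewrite eqn_leq hr h.
by rewrite subnn drop0 drop_size.
Qed.

Lemma obs_ge0 P a n f : pmeas P -> (forall s, 0 <= f s) -> 0 <= obs P a n f.
Proof.
by move=> [_ _ Pp] hf; apply: tsum_ge0 => w _; rewrite mulr_ge0.
Qed.

End Prefix.
Section Block.
Variables (R : realType) (m : nat) (H : nat) (ph : seq 'I_m -> R).
Hypothesis Hpos : (0 < H)%N.
Hypothesis phm : pmeas ph.
Local Notation T := 'I_m.

Fixpoint pbf (f : nat) (s : seq T) : R :=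
  match f with
  | 0 => ph s
  | f'.+1 => if (size s <= H)%N then ph s else ph (take H s) * pbf f' (drop H s)
  end.

Definition Pb s := pbf (size s) s.

Lemma pbf_fuel f1 f2 s : (size s <= f1)%N -> (size s <= f2)%N -> pbf f1 s = pbf f2 s.
Proof.
elim: f1 f2 s => [|f1 IH] [|f2] s h1 h2 //=.
- by move: h1; rewrite leqn0 => /nilP ->.
- by move: h2; rewrite leqn0 => /nilP ->.
- case: ifP => // hs; congr (_ * _); apply: IH; rewrite size_drop.
    by move: h1 Hpos; rewrite leq_subLR; lia.
  by move: h2 Hpos; rewrite leq_subLR; lia.
Qed.

Lemma PbE s : Pb s = if (size s <= H)%N then ph s else ph (take H s) * Pb (drop H s).
Proof.
rewrite /Pb (@pbf_fuel (size s) (size s).+1) //=; case: ifP => // _.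
by congr (_ * _); apply: pbf_fuel => //; rewrite size_drop leq_subr.
Qed.

Lemma Pb_small s : (size s <= H)%N -> Pb s = ph s.
Proof. by move=> h; rewrite PbE h. Qed.

Lemma Pb_cat B w : size B = H -> Pb (B ++ w) = ph B * Pb w.
Proof.
move=> hB; have [P0 _ _] := phm.
rewrite PbE size_cat hB; case: ifP => [h|_].
  have -> : w = [::] by apply/nilP; rewrite /nilp; move: h; lia.
  by rewrite cats0 Pb_small // P0 mulr1.
by rewrite -hB take_size_cat // drop_size_cat.
Qed.

Lemma Pb_ge0 s : 0 <= Pb s.
Proof.
have [_ _ Pp] := phm; rewrite /Pb; move: (size s) => f.
elim: f s => [|f IH] s /=; first exact: Pp.
by case: ifP => _; rewrite ?mulr_ge0.
Qed.

Lemma Pb_rcons s : \sum_(x : T) Pb (rcons s x) = Pb s.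
Proof.
have [P0 Pr Pp] := phm.
move: {2}(size s) (leqnn (size s)) => k; elim: k s => [|k IH] s hs.
  move: hs; rewrite leqn0 => /nilP ->; rewrite Pb_small //.
  by under eq_bigr do rewrite Pb_small // ?size_rcons //; rewrite Pr.
case: (ltnP (size s) H) => h.
  rewrite Pb_small ?(ltnW h) //.
  by under eq_bigr do rewrite Pb_small // ?size_rcons //; rewrite Pr.
rewrite -(cat_take_drop H s) Pb_cat ?size_take_min ?(minn_idPl h) //.
under eq_bigr do rewrite rcons_cat Pb_cat ?size_take_min ?(minn_idPl h) //.
rewrite -mulr_sumr IH // size_drop.
by move: hs Hpos h; lia.
Qed.

Lemma Pb_pmeas : pmeas Pb.
Proof.
have [P0 _ _] := phm; split; last exact: Pb_ge0.
  by rewrite Pb_small.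
exact: Pb_rcons.
Qed.

Definition Pmix (w : seq T) : R :=
  H%:R^-1 * \sum_(phi < H) tsum phi (fun v => Pb (v ++ w)).

Lemma Pmix_pmeas : pmeas Pmix.
Proof.
split.
- rewrite /Pmix (eq_bigr (fun _ => 1)); last first.
    by move=> i _; under eq_tsum do rewrite cats0; rewrite marg0 //; exact: Pb_pmeas.
  by rewrite sumr_const card_ord mulVf // pnatr_eq0 -lt0n.
- move=> s; rewrite /Pmix -mulr_sumr; congr (_ * _).
  rewrite exchange_big; apply: eq_bigr => phi _.
  rewrite -tsum_sum; apply: eq_tsum => v _.
  by under eq_bigr do rewrite -rcons_cat; rewrite Pb_rcons.
- move=> s; rewrite /Pmix mulr_ge0 ?invr_ge0 ?ler0n //.
  by apply: sumr_ge0 => i _; apply: tsum_ge0 => v _; apply: Pb_ge0.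
Qed.

Lemma obs_mix t n f :
  obs Pmix t n f = H%:R^-1 * \sum_(phi < H) obs Pb (phi + t) n f.
Proof.
rewrite /obs /Pmix.
under eq_tsum do rewrite -mulrA mulr_suml.
rewrite tsumZ tsum_sum; congr (_ * _); apply: eq_bigr => phi _.
rewrite -addnA [in RHS]tsum_cat /tsum exchange_big; apply: eq_bigr => v _.
rewrite mulr_suml; apply: eq_bigr => w _.
by rewrite drop_cat size_tuple ltnNge leq_addr /= addKn.
Qed.

Lemma obs_per a n f : obs Pb (H + a) n f = obs Pb a n f.
Proof.
rewrite /obs -addnA tsum_cat.
under eq_tsum => u hu.
  under eq_tsum => v _.
    rewrite Pb_cat // drop_cat hu ltnNge leq_addr /= addKn -mulrA.
  over.
  rewrite tsumZ.
over.
by rewrite /= tsumZr marg0 ?mul1r.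
Qed.

Lemma sum_rot (g : nat -> R) (t : nat) : (forall a, g (H + a) = g a) ->
  \sum_(phi < H) g (phi + t)%N = \sum_(phi < H) g phi.
Proof.
move=> hg; elim: t => [|t IH]; first by under eq_bigr do rewrite addn0.
rewrite -IH; move: hg; case: H Hpos => // H' _ hg.
rewrite big_ord_recr big_ord_recl /= addrC; congr (_ + _).
  by rewrite addnS -addSn hg.
by apply: eq_bigr => i _; rewrite addnS addSn.
Qed.

Lemma obs_mix_const t n f : obs Pmix t n f = obs Pmix 0 n f.
Proof.
rewrite !obs_mix; congr (_ * _); rewrite (@sum_rot (fun a => obs Pb a n f) t) //.
  by under [RHS]eq_bigr do rewrite addn0.
by move=> a; apply: obs_per.
Qed.

Lemma obs_small r k f : (r + k <= H)%N -> obs Pb r k f = obs ph r k f.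
Proof. by move=> h; apply: eq_tsum => w hw; rewrite Pb_small // hw. Qed.

Lemma obs_split r k f : (r <= H)%N -> (H <= r + k)%N ->
  (forall u v, f (u ++ v) = f u * f v) ->
  obs Pb r k f = obs ph r (H - r) f * obs Pb 0 (r + k - H) f.
Proof.
move=> h1 h2 fM; rewrite /obs (@tsum_eqn _ _ (r + k) (H + (r + k - H))); last first.
  by rewrite subnKC.
rewrite tsum_cat subnKC // add0n.
under eq_tsum => u hu.
  under eq_tsum => v _.
    rewrite Pb_cat // drop_catle ?hu // fM.
    rewrite (_ : _ * _ = (ph u * f (drop r u)) * (Pb v * f v)); last by ring.
  over.
  rewrite tsumZ.
over.
rewrite /= tsumZr; congr (_ * _).
by apply: eq_tsum => v _; rewrite drop0.
Qed.

End Block.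
Section Series.
Variable (R : realType).
Local Open Scope ereal_scope.

Lemma ser_ge (u : nat -> R) N : (forall k, 0 <= u k)%R ->
  (\sum_(k < N) u k)%:E <= \sum_(k <oo) (u k)%:E.
Proof.
move=> u0; rewrite -sumEFin -(big_mkord xpredT (fun k => (u k)%:E)).
by apply: nneseries_lim_ge => k _ _; rewrite lee_fin.
Qed.

Lemma ser_le (u : nat -> R) (B : R) : (forall k, 0 <= u k)%R ->
  (forall N, (\sum_(k < N) u k <= B)%R) -> \sum_(k <oo) (u k)%:E <= B%:E.
Proof.
move=> u0 hB; apply: lime_le.
  by apply: is_cvg_nneseries => k _ _; rewrite lee_fin.
apply: nearW => N; rewrite big_mkord sumEFin lee_fin; exact: hB.
Qed.

Lemma ser_ge0 (u : nat -> R) : (forall k, 0 <= u k)%R -> 0 <= \sum_(k <oo) (u k)%:E.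
Proof. by move=> u0; apply: nneseries_ge0 => k _ _; rewrite lee_fin. Qed.

End Series.
Section Conv.
Variables (R : realType) (n m : nat) (x0 : 'I_m) (s : 'I_m -> {set 'I_n}).
Local Notation T := 'I_m.

Definition nh (e : 'I_n) (u : seq T) : R := (all (fun x => e \notin s x) u)%:R.

Lemma nh_cat e u v : nh e (u ++ v) = nh e u * nh e v.
Proof. by rewrite /nh all_cat; case: (all _ u); case: (all _ v); rewrite ?mulr1 ?mulr0. Qed.

Lemma nh_ge0 e u : 0 <= nh e u.
Proof. exact: ler0n. Qed.

Lemma nh_le1 e u : nh e u <= 1.
Proof. by rewrite /nh; case: (all _ _). Qed.

Lemma forall_drop e t k (w : (t + k).-tuple T) :
  [forall j : 'I_(t + k), (t <= j)%N ==> (e \notin s (tnth w j))] =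
  all (fun x => e \notin s x) (drop t w).
Proof.
apply/forallP/(all_nthP x0) => [H i hi|H j].
  rewrite size_drop size_tuple in hi.
  have hj : (t + i < t + k)%N by move: hi; lia.
  move: (H (Ordinal hj)); rewrite /= leq_addr /= (tnth_nth x0) /=.
  by rewrite nth_drop.
apply/implyP => hj; rewrite (tnth_nth x0).
have := H (j - t)%N; rewrite size_drop size_tuple nth_drop subnKC //.
by apply; move: (ltn_ord j) hj; lia.
Qed.

Lemma miss_probE (K : Defs.kernel R m) e t k :
  miss_prob s K e t k = obs (phK x0 K) t k (nh e).
Proof.
rewrite /miss_prob /obs /tsum; apply: eq_bigr => w _.
by rewrite (prob_histE x0) forall_drop /nh; case: (all _ _).
Qed.

Lemma TdetE (K : Defs.kernel R m) e t :
  Tdet s K e t = (\sum_(k <oo) (obs (phK x0 K) t k (nh e))%:E)%E.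
Proof. by rewrite /Tdet; under eq_eseriesr do rewrite miss_probE. Qed.

Lemma test_probE (K : Defs.kernel R m) i t :
  test_prob K i t = obs (phK x0 K) t 1 (fun u => (nth x0 u 0 == i)%:R).
Proof.
rewrite /test_prob /obs (@tsum_eqn _ _ (t + 1) t.+1) ?addn1 //.
rewrite /tsum; apply: eq_bigr => w _.
rewrite (prob_histE x0) nth_drop addn0 (tnth_nth x0) /=.
by case: (_ == _).
Qed.

Variable ph : seq T -> R.
Hypothesis phm : pmeas ph.

Lemma obs0 t f : obs ph t 0 f = f [::].
Proof.
rewrite /obs; under eq_tsum => w hw do rewrite drop_oversize ?hw ?addn0 //.
by rewrite tsumZr addn0 marg0 // mul1r.
Qed.

Lemma q_ge0 e t k : 0 <= obs ph t k (nh e).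
Proof. by apply: obs_ge0 => // u; exact: nh_ge0. Qed.

Lemma q_mono e t k : obs ph t k.+1 (nh e) <= obs ph t k (nh e).
Proof.
have [_ Pr Pp] := phm.
rewrite /obs (@tsum_eqn _ _ (t + k.+1) (t + k).+1) ?addnS // tsum_rcons.
apply: ler_tsum => u hu.
rewrite -[X in _ <= X * _]Pr mulr_suml; apply: ler_sum => x _.
apply: ler_wpM2l; first exact: Pp.
rewrite -cats1 drop_catle ?hu ?leq_addr // /nh all_cat /= andbT.
by case: (all _ (drop t u)); case: (e \notin s x).
Qed.

Lemma q_anti e t k j : (j <= k)%N -> obs ph t k (nh e) <= obs ph t j (nh e).
Proof.
elim: k => [|k IH]; first by rewrite leqn0 => /eqP ->.
rewrite leq_eqVlt => /orP[/eqP -> //|hj].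
by apply: le_trans (q_mono _ _ _) (IH hj).
Qed.

Lemma q_le1 e t k : obs ph t k (nh e) <= 1.
Proof.
by apply: le_trans (q_anti _ _ (leq0n k)) _; rewrite obs0 /nh.
Qed.

Lemma q_markov e t k : k%:R * obs ph t k (nh e) <= \sum_(j < k) obs ph t j (nh e).
Proof.
rewrite mulr_natl -[X in _ *+ X]card_ord -sumr_const; apply: ler_sum => j _.
by apply: q_anti; exact: ltnW.
Qed.

End Conv.
Arguments nh {R n m} s e u.
Lemma sum_ord_le (R : realType) (u : nat -> R) (N M : nat) : (forall k, 0 <= u k) ->
  (N <= M)%N -> \sum_(k < N) u k <= \sum_(k < M) u k.
Proof.
move=> u0 h; rewrite -(subnKC h) big_split_ord /= lerDl.
by apply: sumr_ge0 => i _; exact: u0.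
Qed.

Section Bounds.
Variables (R : realType) (n m : nat) (x0 : 'I_m) (s : 'I_m -> {set 'I_n}).
Variables (H : nat) (ph : seq 'I_m -> R) (e : 'I_n).
Hypothesis Hpos : (0 < H)%N.
Hypothesis phm : pmeas ph.
Local Notation qK t k := (obs ph t k (nh s e)).
Local Notation qB t k := (obs (Pb H ph) t k (nh s e)).

Hypothesis qlt : qK 0 H < 1.
Let S0 := \sum_(k < H) qK 0 k.
Let C := S0 / (1 - qK 0 H).

Lemma qB_ge0 t k : 0 <= qB t k.
Proof. by apply: q_ge0; apply: Pb_pmeas. Qed.

Lemma S0_ge0 : 0 <= S0.
Proof. by apply: sumr_ge0 => k _; apply: q_ge0. Qed.

Lemma S0_le_C : S0 <= C.
Proof.
rewrite /C ler_pdivlMr ?subr_gt0 //.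
have h0 := S0_ge0; have h1 : 0 <= qK 0 H by apply: q_ge0.
by rewrite ler_piMr // lerBlDr lerDl.
Qed.

Lemma claimA N : \sum_(k < N) qB 0 k <= C.
Proof.
elim/ltn_ind: N => N IH.
case: (leqP N H) => hN.
  apply: le_trans S0_le_C; rewrite /S0.
  rewrite (eq_bigr (fun k : 'I_N => qK 0 k)); last first.
    by move=> k _; apply: obs_small; move: (ltn_ord k) hN; lia.
  by apply: (@sum_ord_le _ (fun k => qK 0 k)) => // k; apply: q_ge0.
rewrite -(subnKC (ltnW hN)) big_split_ord /=.
rewrite (eq_bigr (fun k : 'I_H => qK 0 k)); last first.
  by move=> k _; apply: obs_small; move: (ltn_ord k); lia.
rewrite (eq_bigr (fun k : 'I_(N - H) => qK 0 H * qB 0 k)); last first.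
  move=> k _; rewrite (@obs_split _ _ _ _ Hpos phm) ?leq_addr //; last exact: nh_cat.
  by rewrite subn0 add0n addKn.
rewrite -mulr_sumr -/S0.
have h : \sum_(i < N - H) qB 0 i <= C by apply: IH; rewrite ltn_subrL Hpos; move: hN; lia.
have hq0 : 0 <= qK 0 H by apply: q_ge0.
apply: le_trans (lerD (lexx S0) (ler_wpM2l hq0 h)) _.
rewrite /C; have hd : 0 < 1 - qK 0 H by rewrite subr_gt0.
suff -> : S0 + qK 0 H * (S0 / (1 - qK 0 H)) = S0 / (1 - qK 0 H) by [].
by field; rewrite gt_eqF.
Qed.

Lemma claimB r N : (r < H)%N ->
  \sum_(k < N) qB r k <= \sum_(k < H - r) qK r k + qK r (H - r) * C.
Proof.
move=> hr.
have hC : 0 <= qK r (H - r) * C.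
  by rewrite mulr_ge0 ?q_ge0 // (le_trans S0_ge0 S0_le_C).
case: (leqP N (H - r)) => hN.
  rewrite (eq_bigr (fun k : 'I_N => qK r k)); last first.
    move=> k _; apply: obs_small; move: (ltn_ord k) hN hr; lia.
  rewrite -[X in X <= _]addr0; apply: lerD => //.
  by apply: (@sum_ord_le _ (fun k => qK r k)) => // k; apply: q_ge0.
rewrite -(subnKC (ltnW hN)) big_split_ord /=.
rewrite (eq_bigr (fun k : 'I_(H - r) => qK r k)); last first.
  move=> k _; apply: obs_small; move: (ltn_ord k) hr; lia.
apply: lerD => //.
rewrite (eq_bigr (fun k : 'I_(N - (H - r)) => qK r (H - r) * qB 0 k)); last first.
  move=> k _; rewrite (@obs_split _ _ _ _ Hpos phm) ?(ltnW hr) //; last 2 first.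
  - move: hr; lia.
  - exact: nh_cat.
  by congr (_ * _); congr obs; move: hr; lia.
by rewrite -mulr_sumr; apply: ler_wpM2l; [apply: q_ge0 | apply: claimA].
Qed.

End Bounds.
Section Bounds2.
Variables (R : realType) (n m : nat) (s : 'I_m -> {set 'I_n}).
Variables (H : nat) (ph : seq 'I_m -> R) (e : 'I_n).
Hypothesis Hpos : (0 < H)%N.
Hypothesis phm : pmeas ph.
Local Notation qK t k := (obs ph t k (nh s e)).
Local Notation qB t k := (obs (Pb H ph) t k (nh s e)).
Variables (TK : nat -> R) (Mb : R).
Hypothesis hTK : forall phi N, \sum_(k < N) qK phi k <= TK phi.
Hypothesis hTM : forall phi, TK phi <= Mb.
Hypothesis hHM : 2 * Mb <= H%:R.

Lemma Mb_ge0 : 0 <= Mb.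
Proof.
apply: le_trans (hTM 0); apply: le_trans (hTK 0 0).
by rewrite big_ord0.
Qed.

Lemma qK_markov phi k : (0 < k)%N -> qK phi k <= Mb / k%:R.
Proof.
move=> hk; rewrite ler_pdivlMr ?ltr0n // mulrC.
by apply: le_trans (q_markov s phm e phi k) _; apply: le_trans (hTK phi k) (hTM phi).
Qed.

Lemma qK0H_le : qK 0 H <= 2^-1.
Proof.
apply: le_trans (qK_markov 0 Hpos) _.
rewrite ler_pdivrMr ?ltr0n //; move: hHM; lra.
Qed.

Lemma qlt1 : qK 0 H < 1.
Proof. by apply: le_lt_trans qK0H_le _; rewrite invf_lt1 // ltr1n. Qed.

Lemma C_le : (\sum_(k < H) qK 0 k) / (1 - qK 0 H) <= 2 * Mb.
Proof.
have h1 : 2^-1 <= 1 - qK 0 H by move: qK0H_le; lra.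
have h2 : 0 < 1 - qK 0 H by move: qK0H_le; lra.
rewrite ler_pdivrMr //; apply: le_trans (le_trans (hTK 0 H) (hTM 0)) _.
have hM := Mb_ge0; nra.
Qed.

Lemma mix_bound N :
  \sum_(k < N) obs (Pmix H ph) 0 k (nh s e) <=
  H%:R^-1 * \sum_(phi < H) TK phi +
  H%:R^-1 * (2 * Mb) * \sum_(phi < H) qK phi (H - phi).
Proof.
under eq_bigr do rewrite obs_mix.
rewrite -mulr_sumr exchange_big -mulrA -mulrDr.
apply: ler_wpM2l; first by rewrite invr_ge0 ler0n.
rewrite mulr_sumr -big_split; apply: ler_sum => phi _.
have -> : \sum_(k < N) qB (phi + 0)%N k = \sum_(k < N) qB phi k.
  by apply: eq_bigr => k _; rewrite addn0.
apply: le_trans (claimB Hpos phm qlt1 N (ltn_ord phi)) _.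
apply: lerD; first exact: hTK.
rewrite [X in _ <= X]mulrC; apply: ler_wpM2l; first by apply: q_ge0.
exact: C_le.
Qed.

End Bounds2.

Lemma tail_bound (R : realType) n m (s : 'I_m -> {set 'I_n}) (ph : seq 'I_m -> R) e
  (M : R) (Nn L : nat) : pmeas ph -> (0 < L)%N ->
  (forall phi, \sum_(k < L) obs ph phi k (nh s e) <= M) ->
  \sum_(phi < Nn + L) obs ph phi (Nn + L - phi) (nh s e) <= Nn%:R * (M / L%:R) + L%:R.
Proof.
move=> phm hL hM; rewrite big_split_ord /=; apply: lerD.
  rewrite mulr_natl -[X in _ *+ X]card_ord -sumr_const.
  apply: ler_sum => phi _.
  apply: le_trans (q_anti s phm e phi (_ : (L <= Nn + L - phi)%N)) _.
    by move: (ltn_ord phi); lia.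
  rewrite ler_pdivlMr ?ltr0n // mulrC; apply: le_trans (q_markov s phm e phi L) (hM phi).
rewrite -[X in X%:R]card_ord -sumr_const.
by apply: ler_sum => i _; apply: (q_le1 s phm).
Qed.
Section Construct.
Variables (R : realType) (n m : nat) (s : 'I_m -> {set 'I_n}).

Lemma cesaro_cst_cvg (u : nat -> R) : (forall t, u t = u 0%N) -> cvgn (Defs.cesaro u).
Proof.
move=> hu; have -> : Defs.cesaro u = fun _ => u 0%N.
  apply: funext => N; rewrite /Defs.cesaro; under eq_bigr do rewrite hu.
  by rewrite sumr_const card_ord -[u 0%N *+ _]mulr_natr mulfK // pnatr_eq0.
exact: is_cvg_cst.
Qed.

Lemma miss_ge0 (K : Defs.kernel R m) e t k : is_kernel K -> 0 <= miss_prob s K e t k.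
Proof.
move=> [K0 _]; apply: sumr_ge0 => w _; apply: mulr_ge0.
  by apply: prodr_ge0 => i _; apply: K0.
by case: ifP.
Qed.

Lemma Tdet_ge0 (K : Defs.kernel R m) e t : is_kernel K -> (0 <= Tdet s K e t)%E.
Proof. by move=> kK; apply: ser_ge0 => k; apply: miss_ge0. Qed.

Lemma Tdet_le_Mt (K : Defs.kernel R m) e t : (Tdet s K e t <= Mt s K e)%E.
Proof. by apply: ereal_sup_ubound; exists t. Qed.

Lemma Tdet_fin (K : Defs.kernel R m) e t : valid s K ->
  Tdet s K e t = (fine (Tdet s K e t))%:E.
Proof.
move=> [kK hM _ _]; rewrite fineK // ge0_fin_numE; last exact: Tdet_ge0.
exact: le_lt_trans (Tdet_le_Mt _ _ _) (hM e).
Qed.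

Lemma Mt_fin (K : Defs.kernel R m) e : valid s K ->
  Mt s K e = (fine (Mt s K e))%:E.
Proof.
move=> hK; have [kK hM _ _] := hK; rewrite fineK // ge0_fin_numE //.
exact: le_trans (Tdet_ge0 _ 0 kK) (Tdet_le_Mt _ _ _).
Qed.

Lemma valid_m (K : Defs.kernel R m) : valid s K -> (0 < m)%N.
Proof.
move=> [[_ K1] _ _ _]; case: m K K1 => // K K1.
by move: (K1 [::]); rewrite big_ord0 => /eqP; rewrite eq_sym oner_eq0.
Qed.

End Construct.
Lemma construct (R : realType) (n m : nat) (s : 'I_m -> {set 'I_n})
  (K : Defs.kernel R m) (eps : R) : valid s K -> 0 < eps ->
  exists K' : Defs.kernel R m, valid s K' /\
    forall e t, (Tdet s K' e t <= (Et s K e + eps)%:E)%E.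
Proof.
move=> hK heps; have [kK hMt hcE htp] := hK.
have m0 := valid_m hK; pose x0 := Ordinal m0.
pose ph := phK x0 K; have phm : pmeas ph := phK_pmeas x0 kK.
pose TK e t := fine (Tdet s K e t).
pose Mb := 1 + \sum_(e < n) fine (Mt s K e).
have hTdet e t : Tdet s K e t = (TK e t)%:E by exact: Tdet_fin.
have hTK e t N : \sum_(k < N) obs ph t k (nh s e) <= TK e t.
  rewrite -lee_fin -hTdet (TdetE x0); apply: ser_ge => k.
  by apply: q_ge0.
have hTM e t : TK e t <= Mb.
  have h1 : TK e t <= fine (Mt s K e).
    by rewrite -lee_fin -hTdet -Mt_fin //; exact: Tdet_le_Mt.
  apply: le_trans h1 _; rewrite /Mb (bigD1 e) //=.
  have : 0 <= \sum_(i < n | i != e) fine (Mt s K i).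
    apply: sumr_ge0 => i _; apply: fine_ge0.
    exact: le_trans (Tdet_ge0 s i 0 kK) (Tdet_le_Mt s K i 0).
  lra.
have Mb1 : 1 <= Mb.
  rewrite /Mb lerDl; apply: sumr_ge0 => i _; apply: fine_ge0.
  exact: le_trans (Tdet_ge0 s i 0 kK) (Tdet_le_Mt s K i 0).
have ev : \forall N \near \oo, forall e, Defs.cesaro (TK e) N <= Et s K e + eps / 2.
  apply: filter_forall => e.
  have := hcE e; rewrite -/(Et s K e) => /cvgrPdist_le /(_ (eps / 2)).
  rewrite divr_gt0 // => /(_ isT); apply: filterS => N /ler_normlP [h1 h2].
  by move: h1 h2; rewrite /TK; lra.
have [N0 _ hN0] := ev.
have arch (x : R) : exists a : nat, x < a%:R.
  exists (Num.truncn x).+1; exact: truncnS_gt.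
have [L hL] := arch (8 * Mb ^+ 2 / eps).
have [a1 ha1] := arch (8 * Mb * L%:R / eps).
have [a2 ha2] := arch (2 * Mb).
have L0 : (0 < L)%N.
  rewrite lt0n; apply/eqP => L0; move: hL; rewrite L0.
  have : 0 <= 8 * Mb ^+ 2 / eps.
    by apply: divr_ge0; [rewrite mulr_ge0 // sqr_ge0 | exact: ltW].
  lra.
pose Nn := (N0 + a1 + a2).+1.
have hNn1 : 8 * Mb * L%:R / eps < Nn%:R.
  by apply: lt_le_trans ha1 _; rewrite ler_nat /Nn; lia.
have hNn2 : 2 * Mb < Nn%:R.
  by apply: lt_le_trans ha2 _; rewrite ler_nat /Nn; lia.
pose H := (Nn + L)%N.
have Hpos : (0 < H)%N by rewrite /H; lia.
have hHN : (N0 <= H.-1)%N by rewrite /H /Nn; lia.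
have hHM : 2 * Mb <= H%:R.
  by apply: le_trans (ltW hNn2) _; rewrite ler_nat /H leq_addr.
pose P' := Pmix H ph.
have hP' : pmeas P' := Pmix_pmeas Hpos phm.
pose K' := kofp x0 P'.
have hPh : phK x0 K' = P' by apply: funext => w; apply: phK_kofp.
have hT' e t : Tdet s K' e t = Tdet s K' e 0.
  rewrite !(TdetE x0) hPh; apply: eq_eseriesr => k _.
  by rewrite obs_mix_const.
have hB e : (Tdet s K' e 0 <= (Et s K e + eps)%:E)%E.
  rewrite (TdetE x0) hPh.
  apply: le_trans.
    apply: ser_le; first by move=> k; apply: q_ge0.
    by move=> N; apply: (mix_bound Hpos phm (hTK e) (hTM e) hHM).
  rewrite lee_fin.
  have h1 : H%:R^-1 * \sum_(phi < H) TK e phi <= Et s K e + eps / 2.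
    by have := hN0 _ hHN e; rewrite /Defs.cesaro prednK // mulrC.
  have h2 : \sum_(phi < H) obs ph phi (H - phi) (nh s e) <=
      Nn%:R * (Mb / L%:R) + L%:R.
    apply: tail_bound => // phi; exact: le_trans (hTK e phi L) (hTM e phi).
  have hq : 0 <= \sum_(phi < H) obs ph phi (H - phi) (nh s e).
    by apply: sumr_ge0 => i _; apply: q_ge0.
  suff h3 : H%:R^-1 * (2 * Mb) * (Nn%:R * (Mb / L%:R) + L%:R) <= eps / 2.
    apply: le_trans (lerD h1 (le_trans _ h3)) _.
      apply: ler_wpM2l => //; rewrite mulr_ge0 ?invr_ge0 ?ler0n //.
      by move: Mb1; lra.
    lra.
  have hl : 0 < L%:R :> R by rewrite ltr0n.
  have ha : 0 <= Nn%:R :> R by rewrite ler0n.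
  have hh : H%:R = Nn%:R + L%:R :> R by rewrite /H natrD.
  have hhp : 0 < H%:R :> R by rewrite ltr0n.
  have e1 : Mb * (Mb / L%:R) <= eps / 8.
    rewrite mulrA ler_pdivrMr //; move: hL; rewrite ltr_pdivrMr // expr2; lra.
  have e2 : 8 * Mb * L%:R <= Nn%:R * eps.
    by move: hNn1; rewrite ltr_pdivrMr // => /ltW.
  have t0 : 0 <= Mb / L%:R by rewrite divr_ge0 ?ltW //; lra.
  set t := Mb / L%:R in e1 t0 *.
  rewrite -mulrA ler_pdivrMl // hh.
  have e3 : Nn%:R * (Mb * t) <= Nn%:R * (eps / 8) by apply: ler_wpM2l.
  nra.
exists K'; split; last by move=> e t; rewrite hT'; exact: hB.
split.
- exact: kofp_kernel hP'.
- move=> e; apply: (@le_lt_trans _ _ (Et s K e + eps)%:E); last exact: ltry.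
  by apply: ge_ereal_sup => _ [t _ <-]; rewrite hT'; exact: hB.
- by move=> e; apply: cesaro_cst_cvg => t; rewrite hT'.
- move=> i; apply: cesaro_cst_cvg => t; rewrite !(test_probE x0) hPh.
  exact: obs_mix_const.
Qed.
Lemma le_eps (R : realType) (x y c : R) : 0 <= c ->
  (forall e, 0 < e -> x <= y + e * c) -> x <= y.
Proof.
move=> c0 h; rewrite leNgt; apply/negP => hyx.
have hc1 : 0 < c + 1 by lra.
have := h ((x - y) / (c + 1)); rewrite divr_gt0 ?subr_gt0 // => /(_ isT).
have : (x - y) / (c + 1) * c < x - y.
  rewrite mulrAC ltr_pdivrMr // ltr_pM2l ?subr_gt0 //; lra.
lra.
Qed.

Lemma cesaro_le (R : realType) (u : nat -> R) v N : (forall t, u t <= v) ->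
  Defs.cesaro u N <= v.
Proof.
move=> hu; rewrite /Defs.cesaro ler_pdivrMr ?ltr0n //.
apply: le_trans (_ : _ <= \sum_(t < N.+1) v) _.
  by apply: ler_sum => t _; apply: hu.
by rewrite sumr_const card_ord mulr_natr.
Qed.

Lemma cesaro_ge (R : realType) (u w : nat -> R) N : (forall t, u t <= w t) ->
  Defs.cesaro u N <= Defs.cesaro w N.
Proof.
move=> hu; rewrite /Defs.cesaro ler_wpM2r ?invr_ge0 ?ler0n //.
by apply: ler_sum => t _; apply: hu.
Qed.

Lemma cesaro_ge0 (R : realType) (u : nat -> R) N : (forall t, 0 <= u t) ->
  0 <= Defs.cesaro u N.
Proof.
move=> hu; rewrite /Defs.cesaro divr_ge0 ?ler0n //.
by apply: sumr_ge0 => t _; apply: hu.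
Qed.

Lemma cesaro_lin (R : realType) n (p : 'I_n -> R) (f : 'I_n -> nat -> R) N :
  \sum_(e < n) p e * Defs.cesaro (f e) N =
  Defs.cesaro (fun t => \sum_(e < n) p e * f e t) N.
Proof.
rewrite /Defs.cesaro; under eq_bigr do rewrite mulrA; rewrite -mulr_suml.
congr (_ / _); under eq_bigr do rewrite mulr_sumr.
by rewrite exchange_big.
Qed.

Section Obj.
Variables (R : realType) (n m : nat) (p : 'I_n -> R) (s : 'I_m -> {set 'I_n}).
Hypothesis hn : (0 < n)%N.
Hypothesis hp : forall e, 0 <= p e.
Variable K : Defs.kernel R m.
Hypothesis hK : valid s K.

Let TK e t := fine (Tdet s K e t).

Lemma TdetK e t : Tdet s K e t = (TK e t)%:E.
Proof. exact: Tdet_fin. Qed.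

Lemma cE e : Defs.cesaro (TK e) @ \oo --> Et s K e.
Proof. by have [_ _ h _] := hK; exact: h. Qed.

Lemma near_all eps : 0 < eps -> exists N, forall e,
  `|Et s K e - Defs.cesaro (TK e) N| <= eps.
Proof.
move=> he.
have ev : \forall N \near \oo, forall e, `|Et s K e - Defs.cesaro (TK e) N| <= eps.
  apply: filter_forall => e; have := @cE e; move=> /cvgrPdist_le /(_ eps).
  by rewrite he => /(_ isT).
have [N0 _ hN0] := ev; exists N0; exact: (hN0 N0 (leqnn N0)).
Qed.

Lemma MEP_le_EMP : (MEP p s K <= EMP p s K)%E.
Proof.
apply: ge_ereal_sup => _ [t _ <-]; apply: lee_sum => e _.
by apply: lee_wpmul2l; [rewrite lee_fin | exact: Tdet_le_Mt].
Qed.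

Lemma EEP_le_MEP : (EEP p s K <= MEP p s K)%E.
Proof.
have hV t : ((\sum_(e < n) p e * TK e t)%:E <= MEP p s K)%E.
  apply: ereal_sup_ubound; exists t => //=.
  by rewrite -sumEFin; apply: eq_bigr => e _; rewrite TdetK.
case hM : (MEP p s K) => [v||]; last 2 first.
- by rewrite leey.
- by move: (hV 0%N); rewrite hM.
rewrite /EEP lee_fin.
have hv t : \sum_(e < n) p e * TK e t <= v by rewrite -lee_fin -hM.
apply: (@le_eps _ _ _ (\sum_(e < n) p e)); first by apply: sumr_ge0.
move=> eps he; have [N hN] := near_all he.
apply: le_trans (_ : \sum_(e < n) p e * (Defs.cesaro (TK e) N + eps) <= _).
  apply: ler_sum => e _; apply: ler_wpM2l => //.
  by move: (hN e) => /ler_normlP [h1 h2]; lra.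
under eq_bigr do rewrite mulrDr; rewrite big_split /= cesaro_lin -mulr_suml mulrC.
by apply: lerD => //; apply: cesaro_le.
Qed.

Lemma mxE t : (\big[maxe/0%E]_(e < n) ((p e)%:E * Tdet s K e t))%E =
  (\big[Num.max/0]_(e < n) (p e * TK e t))%:E.
Proof.
rewrite -EFin_bigmax; apply: eq_bigr => e _.
by rewrite TdetK.
Qed.

Lemma MWP_le_WMP : (MWP p s K <= WMP p s K)%E.
Proof.
have hV e t : ((p e * TK e t)%:E <= WMP p s K)%E.
  by apply: ereal_sup_ubound; exists (e, t) => //=; rewrite TdetK.
case hM : (WMP p s K) => [v||]; last 2 first.
- by rewrite leey.
- by move: (hV (Ordinal hn) 0%N); rewrite hM.
have hv e t : p e * TK e t <= v by rewrite -lee_fin -hM.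
rewrite /MWP limn_esup_lim; apply: lime_le; first exact: is_cvg_esups.
apply: nearW => N; apply: ge_ereal_sup => _ [k _ <-]; rewrite lee_fin.
apply: cesaro_le => t; rewrite mxE /=; apply: bigmax_le => //.
  by apply: le_trans (hv (Ordinal hn) 0%N); rewrite mulr_ge0 //; apply: fine_ge0;
     apply: Tdet_ge0; case: hK.
Qed.

Lemma WEP_le_MWP : (WEP p s K <= MWP p s K)%E.
Proof.
pose u := fun N => (Defs.cesaro (fun t => fine (\big[maxe/0%E]_(e < n)
                              ((p e)%:E * Tdet s K e t))%E) N)%:E.
have hu N : u N = (Defs.cesaro (fun t => \big[Num.max/0]_(e < n) (p e * TK e t)) N)%:E.
  by rewrite /u; congr (_%:E); congr Defs.cesaro; apply: funext => t; rewrite mxE.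
have hMWP : MWP p s K = limn (esups u) by rewrite /MWP limn_esup_lim.
rewrite /WEP -EFin_bigmax hMWP; apply: bigmax_le.
  apply: lime_ge; first exact: is_cvg_esups.
  apply: nearW => N; apply: le_trans (_ : u N <= _)%E.
    by rewrite hu lee_fin; apply: cesaro_ge0 => t; apply: bigmax_ge_id.
  by apply: ereal_sup_ubound; exists N => /=.
move=> e _.
have cv : (fun N => (p e * Defs.cesaro (TK e) N)%:E) @ \oo --> (p e * Et s K e)%:E.
  apply: cvg_EFin; first exact: nearW.
  exact: cvgMl_tmp (@cE e).
rewrite -(cvg_lim _ cv) //; apply: lee_lim; [exact: cvgP cv | exact: is_cvg_esups |].
apply: nearW => N; apply: le_trans (_ : u N <= _)%E; last first.
  by apply: ereal_sup_ubound; exists N => /=.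
rewrite hu lee_fin /Defs.cesaro mulrA; apply: ler_wpM2r; first by rewrite invr_ge0 ler0n.
rewrite mulr_sumr; apply: ler_sum => t _.
by apply: le_trans (le_bigmax _ (fun e => p e * TK e t) e).
Qed.

End Obj.
Section Final.
Variables (R : realType) (n m : nat) (s : 'I_m -> {set 'I_n}).

Lemma inf_mono (F G : Defs.kernel R m -> \bar R) :
  (forall K, valid s K -> (F K <= G K)%E) -> (inf_obj s F <= inf_obj s G)%E.
Proof.
move=> hFG; apply: le_ereal_inf_tmp => _ [K hK <-].
apply: le_trans (hFG K hK); apply: ereal_inf_lbound; exists K => //.
Qed.

Lemma inf_approx (F G : Defs.kernel R m -> \bar R) (c : R) : 0 <= c ->
  (forall K, valid s K -> forall eps, 0 < eps ->
     exists K', valid s K' /\ (F K' <= G K + (eps * c)%:E)%E) ->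
  (inf_obj s F <= inf_obj s G)%E.
Proof.
move=> c0 hFG; apply: le_ereal_inf_tmp => _ [K hK <-].
apply/lee_addgt0Pr => eps he.
have hc1 : 0 < c + 1 by lra.
have he' : 0 < eps / (c + 1) by rewrite divr_gt0.
have [K' [hK' hF]] := hFG K hK _ he'.
apply: le_trans (_ : F K' <= _)%E.
  by apply: ereal_inf_lbound; exists K'.
apply: le_trans hF _; apply: leeD => //; rewrite lee_fin.
rewrite mulrAC ler_pdivrMr //; nra.
Qed.

Variables (p : 'I_n -> R) (hp : forall e, 0 <= p e).

Lemma Mt_bound (K' : Defs.kernel R m) (f : 'I_n -> R) e :
  (forall e t, Tdet s K' e t <= (f e)%:E)%E -> (Mt s K' e <= (f e)%:E)%E.
Proof. by move=> h; apply: ge_ereal_sup => _ [t _ <-]; exact: h. Qed.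

Lemma EMP_approx K eps : valid s K -> 0 < eps ->
  exists K', valid s K' /\ (EMP p s K' <= EEP p s K + (eps * \sum_(e < n) p e)%:E)%E.
Proof.
move=> hK he; have [K' [hK' hT]] := construct hK he.
exists K'; split => //.
rewrite /EMP /EEP -EFinD.
apply: (@le_trans _ _ (\sum_(e < n) (p e)%:E * ((Et s K e + eps)%R)%:E)%E).
  apply: lee_sum => e _; apply: (@lee_wpmul2l _ (p e)%:E); first by rewrite lee_fin.
  exact: (@Mt_bound K' (fun e => Et s K e + eps)).
under eq_bigr do rewrite -EFinM.
rewrite sumEFin.
rewrite lee_fin.
rewrite mulr_sumr.
rewrite -big_split /=.
by apply: ler_sum => e _; rewrite mulrDr (mulrC eps).
Qed.

Lemma WMP_approx K eps : valid s K -> 0 < eps ->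
  exists K', valid s K' /\ (WMP p s K' <= WEP p s K + (eps * \sum_(e < n) p e)%:E)%E.
Proof.
move=> hK he; have [K' [hK' hT]] := construct hK he.
exists K'; split => //.
apply: ge_ereal_sup => _ [[e t] _ <-] /=.
apply: (@le_trans _ _ ((p e)%:E * ((Et s K e + eps)%R)%:E)%E).
  by apply: (@lee_wpmul2l _ (p e)%:E); [rewrite lee_fin | exact: hT].
rewrite /WEP -EFinD -EFinM lee_fin mulrDr; apply: lerD.
  exact: (le_bigmax _ (fun e => p e * Et s K e) e).
rewrite mulrC; apply: ler_wpM2l; first exact: ltW.
by rewrite (bigD1 e) //= lerDl; apply: sumr_ge0.
Qed.

End Final.

Local Close Scope classical_set_scope.
Unset Implicit Arguments.

Theorem lemma2 (R : realType) (n m : nat) (hn : (0 < n)%N)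
  (p : 'I_n -> R) (hp : forall e, 0 <= p e) (s : 'I_m -> {set 'I_n}) :
  [/\ inf_obj s (EMP p s) = inf_obj s (MEP p s),
      inf_obj s (MEP p s) = inf_obj s (EEP p s),
      inf_obj s (WMP p s) = inf_obj s (MWP p s)
    & inf_obj s (MWP p s) = inf_obj s (WEP p s)].
Proof.
have sp : 0 <= \sum_(e < n) p e by apply: sumr_ge0.
have h1 : (inf_obj s (EMP p s) <= inf_obj s (EEP p s))%E.
  by apply: (inf_approx sp) => K hK eps he; apply: EMP_approx.
have h2 : (inf_obj s (EEP p s) <= inf_obj s (MEP p s))%E.
  by apply: inf_mono => K hK; apply: EEP_le_MEP.
have h3 : (inf_obj s (MEP p s) <= inf_obj s (EMP p s))%E.
  by apply: inf_mono => K hK; apply: MEP_le_EMP.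
have w1 : (inf_obj s (WMP p s) <= inf_obj s (WEP p s))%E.
  by apply: (inf_approx sp) => K hK eps he; apply: WMP_approx.
have w2 : (inf_obj s (WEP p s) <= inf_obj s (MWP p s))%E.
  by apply: inf_mono => K hK; apply: WEP_le_MWP.
have w3 : (inf_obj s (MWP p s) <= inf_obj s (WMP p s))%E.
  by apply: inf_mono => K hK; apply: MWP_le_WMP.
split.
- by apply/eqP; rewrite eq_le h3 (le_trans h1 h2).
- by apply/eqP; rewrite eq_le h2 (le_trans h3 h1).
- by apply/eqP; rewrite eq_le w3 (le_trans w1 w2).
- by apply/eqP; rewrite eq_le w2 (le_trans w3 w1).
Qed.
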